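(* Let $\mathcal{X},\mathcal{S},\mathcal{A}$ be finite sets, let $Q(\cdot)\in\Delta(\mathcal{X})$ be an initial distribution and $Q(\cdot\mid x,a)\in\Delta(\mathcal{X})$ a transition kernel, and let $R^r:\mathcal{X}\times\mathcal{A}\to\mathbb{R}$ be the receiver's reward function. Consider the following process over periods $t=1,2,\dots$: $X_1\sim Q$; in period $t$ the sender, who observes $X_t$, sends a signal $S_t\in\mathcal{S}$; the receiver then takes an action $A_t\in\mathcal{A}$ and observes its reward $R^r_t=R^r(X_t,A_t)$; then $X_{t+1}\sim Q(\cdot\mid X_t,A_t)$. Suppose actions are generated by a common-agent policy of type $\theta$: at each $t$, a prescription $\gamma^s_t=\theta^s_t[\mu_t]$, which is a map $\mathcal{X}\to\Delta(\mathcal{S})$, is chosen as a function of the belief $\mu_t$ and the sender plays $S_t\sim\gamma^s_t(\cdot\mid X_t)$; and a prescription $\gamma^r_t=\theta^r_t[\nu_t]\in\Delta(\mathcal{A})$ is chosen as a function of the belief $\nu_t$ and the receiver plays $A_t\sim\gamma^r_t(\cdot)$. Here $\mu_1=Q$, and the beliefs are $$\nu_t(x)=P^{\theta}(X_t=x\mid s_{1:t},a_{1:t-1},r^r_{1:t-1}),\qquad \mu_{t+1}(x)=P^{\theta}(X_{t+1}=x\mid s_{1:t},a_{1:t},r^r_{1:t}).$$ Then there exist update functions $F$ and $G$, not depending on $\theta$, such that for every $t$ (along histories where the conditional probabilities are defined) $$\nu_t=F(\mu_t,\gamma^s_t,s_t),\qquad \mu_{t+1}=G(\nu_t,a_t,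r^r_t).$$
   Context: $\Delta(\mathcal{Y})$ denotes the set of probability distributions on a finite set $\mathcal{Y}$. $P^\theta$ denotes the probability measure on the process induced by the type-$\theta$ policy. The common information at the time the receiver acts in period $t$ is $(s_{1:t},a_{1:t-1},r^r_{1:t-1})$, and at the start of period $t+1$ it is $(s_{1:t},a_{1:t},r^r_{1:t})$; the sender additionally observes the state privately. *)

(* Defs.v *)
From HB Require Import structures.
From mathcomp Require Import all_boot all_order all_algebra.
From mathcomp Require Import reals.
Set Implicit Arguments. Unset Strict Implicit. Unset Printing Implicit Defensive.
Import Order.TTheory GRing.Theory Num.Theory.
Local Open Scope ring_scope.

Section Model.
Variables (X S A : finType) (R : realType).
Variables (Q0 : {ffun X -> R}) (Qt : X -> A -> {ffun X -> R}) (Rr : X -> A -> R).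
(* common-agent policy of type theta: time-indexed maps from beliefs to
   prescriptions (sender: X -> Delta(S); receiver: Delta(A)) *)
Variables (thS : nat -> {ffun X -> R} -> {ffun X -> {ffun S -> R}})
          (thR : nat -> {ffun X -> R} -> {ffun A -> R}).

Definition step := (X * S * A)%type.
(* one period of common information: (S_t, A_t, R^r_t) *)
Definition chstep := (S * A * R)%type.

Definition chist (tau : seq step) : seq chstep :=
  [seq (p.1.2, p.2, Rr p.1.1 p.2) | p <- tau].

Definition trans (tau : seq step) (x : X) : R :=
  match rev tau with
  | [::] => Q0 x
  | p :: _ => Qt p.1.1 p.2 x
  end.

(* normalization of a weight vector (x / 0 = 0 on null histories) *)
Definition normalize (w : X -> R) : {ffun X -> R} :=
  [ffun x => w x / \sum_(y : X) w y].

(* given the joint law jprev of length-n paths: P(X_{n+1} = x, common hist = ch) *)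
Definition mu_w (jprev : seq step -> R) (n : nat) (ch : seq chstep) (x : X) : R :=
  \sum_(tau : n.-tuple step | chist tau == ch) jprev tau * trans tau x.

(* mu_{n+1} = P(X_{n+1} = . | common hist ch) *)
Definition mu_of jprev n ch : {ffun X -> R} := normalize (mu_w jprev n ch).

(* P(X_{n+1} = x, common hist = ch, S_{n+1} = s) *)
Definition nu_w (jprev : seq step -> R) (n : nat) (ch : seq chstep) (s : S) (x : X) : R :=
  \sum_(tau : n.-tuple step | chist tau == ch)
     jprev tau * trans tau x * thS n.+1 (mu_of jprev n ch) x s.

(* nu_{n+1} = P(X_{n+1} = . | common hist ch, S_{n+1} = s) *)
Definition nu_of jprev n ch s : {ffun X -> R} := normalize (nu_w jprev n ch s).

(* joint probability P^theta of a length-n path (x_{1:n}, s_{1:n}, a_{1:n}) *)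
Fixpoint jt (n : nat) : seq step -> R :=
  match n with
  | 0 => fun tau => (tau == [::])%:R
  | n'.+1 => fun tau =>
      if size tau == n'.+1 then
        let tau0 := take n' tau in
        match rev tau with
        | [::] => 0
        | p :: _ =>
            jt n' tau0 * trans tau0 p.1.1
            * thS n'.+1 (mu_of (jt n') n' (chist tau0)) p.1.1 p.1.2
            * thR n'.+1 (nu_of (jt n') n' (chist tau0) p.1.2) p.2
        end
      else 0
  end.

(* beliefs at period t >= 1; ch is the common history of length t-1 *)
Definition mu (t : nat) (ch : seq chstep) : {ffun X -> R} := mu_of (jt t.-1) t.-1 ch.
Definition nu (t : nat) (ch : seq chstep) (s : S) : {ffun X -> R} :=
  nu_of (jt t.-1) t.-1 ch s.

(* P^theta(common hist of length t-1 = ch, S_t = s) *)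
Definition prob_nu (t : nat) (ch : seq chstep) (s : S) : R :=
  \sum_(x : X) nu_w (jt t.-1) t.-1 ch s x.

(* P^theta(common hist of length n = ch) *)
Definition prob_hist (n : nat) (ch : seq chstep) : R :=
  \sum_(tau : n.-tuple step | chist tau == ch) jt n tau.

End Model.

Definition is_dist (R : realType) (T : finType) (p : {ffun T -> R}) : Prop :=
  (forall t, 0 <= p t) /\ \sum_(t : T) p t = 1.

(* Main.v *)
Require Import Defs.
From HB Require Import structures.
From mathcomp Require Import all_boot all_order all_algebra.
From mathcomp Require Import reals.
From mathcomp Require Import ring lra.
Import Order.TTheory GRing.Theory Num.Theory.
Local Open Scope ring_scope.

Lemma sum_tuple_rcons (R : realType) (T : finType) n (F : seq T -> R) :
  \sum_(tau : n.+1.-tuple T) F tau = \sum_(tau0 : n.-tuple T) \sum_(p : T) F (rcons tau0 p).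
Proof.
rewrite pair_bigA /=.
pose h (q : n.-tuple T * T) : n.+1.-tuple T := [tuple of rcons q.1 q.2].
have hinj : injective h.
  move=> [u x] [v y] /(congr1 val) /= /eqP; rewrite eqseq_rcons => /andP[/eqP uv /eqP ->].
  by congr pair; apply: val_inj.
have hbij : bijective h.
  apply: (inj_card_bij hinj).
  by rewrite card_prod !card_tuple expnS mulnC.
rewrite (reindex h) //=; exact: onW_bij.
Qed.

Lemma normalize_ext (X : finType) (R : realType) (w1 w2 : X -> R) :
  (forall x, w1 x = w2 x) -> normalize w1 = normalize w2.
Proof.
move=> e; apply/ffunP => x; rewrite !ffunE e; congr (_ / _).
by apply: eq_bigr => y _.
Qed.

Lemma normalize_scale (X : finType) (R : realType) (c : R) (w : X -> R) :
  c != 0 -> normalize (fun x => c * w x) = normalize w.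
Proof.
move=> c0; apply/ffunP => x; rewrite !ffunE -mulr_sumr invfM mulrACA mulfV // mul1r.
by [].
Qed.

Lemma trans_ge0 (X S A : finType) (R : realType)
  (Q0 : {ffun X -> R}) (Qt : X -> A -> {ffun X -> R}) :
  is_dist Q0 -> (forall x a, is_dist (Qt x a)) ->
  forall (tau : seq (step X S A)) x, 0 <= trans Q0 Qt tau x.
Proof.
move=> [h0 _] hQ tau x; rewrite /trans; case: (rev tau) => [|p _] //.
by case: (hQ p.1.1 p.2).
Qed.

Lemma trans_sum1 (X S A : finType) (R : realType)
  (Q0 : {ffun X -> R}) (Qt : X -> A -> {ffun X -> R}) :
  is_dist Q0 -> (forall x a, is_dist (Qt x a)) ->
  forall (tau : seq (step X S A)), \sum_x trans Q0 Qt tau x = 1.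
Proof.
move=> [_ h0] hQ tau; rewrite /trans; case: (rev tau) => [|p _] //.
by case: (hQ p.1.1 p.2).
Qed.

Lemma jt_ge0 (X S A : finType) (R : realType)
  (Q0 : {ffun X -> R}) (Qt : X -> A -> {ffun X -> R}) (Rr : X -> A -> R)
  (thS : nat -> {ffun X -> R} -> {ffun X -> {ffun S -> R}})
  (thR : nat -> {ffun X -> R} -> {ffun A -> R}) :
  is_dist Q0 -> (forall x a, is_dist (Qt x a)) ->
  (forall t m x, is_dist (thS t m x)) -> (forall t m, is_dist (thR t m)) ->
  forall n tau, 0 <= jt Q0 Qt Rr thS thR n tau.
Proof.
move=> h0 hQ hS hR; elim=> [|n IH] tau /=; first exact: ler0n.
case: ifP => // _; case: (rev tau) => [|p _] //.
apply: mulr_ge0; last by case: (hR n.+1 (nu_of Q0 Qt Rr thS (jt Q0 Qt Rr thS thR n) n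
            (chist Rr (take n tau)) p.1.2)).
apply: mulr_ge0; last by case: (hS n.+1 (mu_of Q0 Qt Rr (jt Q0 Qt Rr thS thR n) n
            (chist Rr (take n tau))) p.1.1).
apply: mulr_ge0; first exact: IH.
exact: trans_ge0.
Qed.

Lemma nu_wE (X S A : finType) (R : realType)
  (Q0 : {ffun X -> R}) (Qt : X -> A -> {ffun X -> R}) (Rr : X -> A -> R)
  (thS : nat -> {ffun X -> R} -> {ffun X -> {ffun S -> R}}) jp n ch s x :
  nu_w Q0 Qt Rr thS jp n ch s x
  = mu_w Q0 Qt Rr jp n ch x * thS n.+1 (mu_of Q0 Qt Rr jp n ch) x s.
Proof. by rewrite /nu_w /mu_w mulr_suml. Qed.

Lemma muw_rcons (X S A : finType) (R : realType)
  (Q0 : {ffun X -> R}) (Qt : X -> A -> {ffun X -> R}) (Rr : X -> A -> R)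
  (thS : nat -> {ffun X -> R} -> {ffun X -> {ffun S -> R}})
  (thR : nat -> {ffun X -> R} -> {ffun A -> R}) n ch s a r x :
  mu_w Q0 Qt Rr (jt Q0 Qt Rr thS thR n.+1) n.+1 (rcons ch (s, a, r)) x
  = thR n.+1 (nu_of Q0 Qt Rr thS (jt Q0 Qt Rr thS thR n) n ch s) a *
    \sum_(x' | Rr x' a == r) nu_w Q0 Qt Rr thS (jt Q0 Qt Rr thS thR n) n ch s x' * Qt x' a x.
Proof.
rewrite /mu_w big_mkcond.
rewrite (@sum_tuple_rcons _ _ n (fun sq => if chist Rr sq == rcons ch (s, a, r)
   then jt Q0 Qt Rr thS thR n.+1 sq * trans Q0 Qt sq x else 0)).
rewrite /nu_w.
under [in RHS]eq_bigr => x' _ do rewrite big_distrl /=.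
rewrite [X in _ = _ * X]exchange_big [RHS]mulr_sumr [RHS]big_mkcond.
apply: eq_bigr => tau0 _.
have Hc p : chist Rr (rcons tau0 p) = rcons (chist Rr tau0) (p.1.2, p.2, Rr p.1.1 p.2).
  by rewrite /chist map_rcons.
have Hj p : jt Q0 Qt Rr thS thR n.+1 (rcons tau0 p) =
   jt Q0 Qt Rr thS thR n tau0 * trans Q0 Qt tau0 p.1.1
            * thS n.+1 (mu_of Q0 Qt Rr (jt Q0 Qt Rr thS thR n) n (chist Rr tau0)) p.1.1 p.1.2
            * thR n.+1 (nu_of Q0 Qt Rr thS (jt Q0 Qt Rr thS thR n) n (chist Rr tau0) p.1.2) p.2.
  by rewrite /= size_rcons size_tuple eqxx -cats1 take_size_cat ?size_tuple // cats1 rev_rcons.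
have Ht p : trans Q0 Qt (rcons tau0 p) x = Qt p.1.1 p.2 x.
  by rewrite /trans rev_rcons.
set RH := (X in _ = X).
under eq_bigr => p _ do rewrite Hc Hj Ht eqseq_rcons.
rewrite {}/RH.
case: (eqVneq (chist Rr tau0) ch) => [->|hne] /=; last first.
  by rewrite big1.
rewrite (bigID (fun p : step X S A => (p.1.2 == s) && (p.2 == a))) /=.
rewrite [X in _ + X]big1 ?addr0; last first.
  move=> [[x' s'] a'] /= /negbTE h; by rewrite !xpair_eqE h.
rewrite (reindex_onto (fun x' : X => ((x', s), a)) (fun p : step X S A => p.1.1)) /=; last first.
  by move=> [[x' s'] a'] /= /andP[/eqP-> /eqP->].
rewrite big_mkcond [RHS]mulr_sumr [RHS]big_mkcond /=.
apply: eq_bigr => x' _; rewrite !xpair_eqE !eqxx /=.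
case: ifP => _ //=.
ring.
Qed.

Lemma prob_hist_sum (X S A : finType) (R : realType)
  (Q0 : {ffun X -> R}) (Qt : X -> A -> {ffun X -> R}) (Rr : X -> A -> R)
  (thS : nat -> {ffun X -> R} -> {ffun X -> {ffun S -> R}})
  (thR : nat -> {ffun X -> R} -> {ffun A -> R}) :
  is_dist Q0 -> (forall x a, is_dist (Qt x a)) ->
  forall m ch, prob_hist Q0 Qt Rr thS thR m ch
   = \sum_x mu_w Q0 Qt Rr (jt Q0 Qt Rr thS thR m) m ch x.
Proof.
move=> h0 hQ m ch; rewrite /prob_hist /mu_w exchange_big; apply: eq_bigr => tau _.
by rewrite -mulr_sumr trans_sum1 ?mulr1.
Qed.

Theorem lemma1 (X S A : finType) (R : realType)
  (Q0 : {ffun X -> R}) (Qt : X -> A -> {ffun X -> R}) (Rr : X -> A -> R) :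
  is_dist Q0 -> (forall x a, is_dist (Qt x a)) ->
  exists (F : {ffun X -> R} -> {ffun X -> {ffun S -> R}} -> S -> {ffun X -> R})
         (G : {ffun X -> R} -> A -> R -> {ffun X -> R}),
  forall (thS : nat -> {ffun X -> R} -> {ffun X -> {ffun S -> R}})
         (thR : nat -> {ffun X -> R} -> {ffun A -> R}),
  (forall t m x, is_dist (thS t m x)) -> (forall t m, is_dist (thR t m)) ->
  forall (t : nat) (ch : seq (chstep S A R)) (s : S) (a : A) (r : R),
    (0 < t)%N -> size ch = t.-1 ->
    (0 < prob_nu Q0 Qt Rr thS thR t ch s ->
       nu Q0 Qt Rr thS thR t ch s
       = F (mu Q0 Qt Rr thS thR t ch) (thS t (mu Q0 Qt Rr thS thR t ch)) s) /\
    (0 < prob_hist Q0 Qt Rr thS thR t (rcons ch (s, a, r)) ->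
       mu Q0 Qt Rr thS thR t.+1 (rcons ch (s, a, r))
       = G (nu Q0 Qt Rr thS thR t ch s) a r).
Proof.
move=> h0 hQ.
exists (fun (m : {ffun X -> R}) (g : {ffun X -> {ffun S -> R}}) (s : S) => normalize (fun x => m x * g x s)).
exists (fun (nu : {ffun X -> R}) (a : A) (r : R) => normalize (fun x => \sum_(x' | Rr x' a == r) nu x' * Qt x' a x)).
move=> thS thR hS hR [//|n] ch s a r _ _.
have jge0 := @jt_ge0 _ _ _ _ _ _ Rr _ _ h0 hQ hS hR.
have muge0 m c x : 0 <= mu_w Q0 Qt Rr (jt Q0 Qt Rr thS thR m) m c x.
  apply: sumr_ge0 => tau _; apply: mulr_ge0 => //; exact: trans_ge0.
have nuge0 c s' x : 0 <= nu_w Q0 Qt Rr thS (jt Q0 Qt Rr thS thR n) n c s' x.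
  rewrite nu_wE; apply: mulr_ge0 => //.
  by case: (hS n.+1 (mu_of Q0 Qt Rr (jt Q0 Qt Rr thS thR n) n c) x).
split.
- rewrite /prob_nu /nu /mu /= => hp.
  rewrite /nu_of.
  set Z := \sum_y mu_w Q0 Qt Rr (jt Q0 Qt Rr thS thR n) n ch y.
  have Z0 : Z != 0.
    apply/eqP => Z0; move: hp.
    have H := psumr_eq0P (fun y _ => muge0 n ch y) Z0.
    by rewrite big1 ?ltxx // => x _; rewrite nu_wE H ?mul0r.
  rewrite -(@normalize_scale _ _ Z^-1 (nu_w Q0 Qt Rr thS (jt Q0 Qt Rr thS thR n) n ch s)) ?invr_neq0 //.
  apply: normalize_ext => x; rewrite nu_wE /mu_of /normalize ffunE -/Z.
  ring.
- rewrite /mu /nu /= => hp.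
  set c0 := thR n.+1 (nu_of Q0 Qt Rr thS (jt Q0 Qt Rr thS thR n) n ch s) a.
  set W := \sum_y nu_w Q0 Qt Rr thS (jt Q0 Qt Rr thS thR n) n ch s y.
  have hp' : 0 < \sum_x mu_w Q0 Qt Rr (jt Q0 Qt Rr thS thR n.+1) n.+1 (rcons ch (s, a, r)) x.
    by rewrite -(@prob_hist_sum _ _ _ _ _ _ _ _ _ h0 hQ).
  have c00 : c0 != 0.
    apply/eqP => e; move: hp'; rewrite big1 ?ltxx // => x _.
    by rewrite muw_rcons -/c0 e mul0r.
  have W0 : W != 0.
    apply/eqP => e; have H := psumr_eq0P (fun y _ => nuge0 ch s y) e.
    move: hp'; rewrite big1 ?ltxx // => x _.
    by rewrite muw_rcons big1 ?mulr0 // => x' _; rewrite H ?mul0r.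
  rewrite /mu_of -(@normalize_scale _ _ (c0 * W) (fun x => \sum_(x' | Rr x' a == r) nu_of Q0 Qt Rr thS (jt Q0 Qt Rr thS thR n) n ch s x' * Qt x' a x)) ?mulf_neq0 //.
  apply: normalize_ext => x; rewrite muw_rcons -/c0 -mulrA; congr (_ * _).
  rewrite mulr_sumr; apply: eq_bigr => x' _; rewrite /nu_of /normalize ffunE -/W.
  by field.
Qed.
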